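(* Let $K\ge 1$ and fix an index $j\in\{1,\dots,K\}$. Let $\eta_1\in(0,1]$, $\eta_2\in(0,1]$, $P>0$, $\sigma_b^2>0$, $\sigma_D^2>0$, and for each $k\in\{1,\dots,K\}$ let $h_k,g_k\in\mathbb{C}\setminus\{0\}$ and $v_k\in\mathbb{R}$ with $v_k\ge -\eta_1\eta_2P|h_k|^2$. Define $$a_k=P|h_k|^2+\max\Big\{0,\frac{v_k}{\eta_1}\Big\}+\min\Big\{0,\frac{v_k}{\eta_1\eta_2}\Big\}+\sigma_b^2,$$ $$U_k=\Big(1+\min\Big\{0,\frac{v_k}{\eta_1\eta_2P|h_k|^2}\Big\}\Big)P|h_k|^2+\sigma_b^2 .$$ Fix values $x_k\in[\sigma_b^2,U_k]$ for all $k\neq j$, and for $x_j\in[\sigma_b^2,U_j]$ define $$F_1(x_j)=\Big(\sqrt{\eta_1|g_j|^2(a_j-x_j)\big(1-\tfrac{\sigma_b^2}{x_j}\big)}+\sum_{k\neq j}\sqrt{\eta_1|g_k|^2(a_k-x_k)\big(1-\tfrac{\sigma_b^2}{x_k}\big)}\Big)^2,$$ $$F_2(x_j)=\eta_1|g_j|^2(a_j-x_j)\frac{\sigma_b^2}{x_j}+\sum_{k\neq j}\eta_1|g_k|^2(a_k-x_k)\frac{\sigma_b^2}{x_k}+\sigma_D^2 .$$ Then for every $q\ge 0$ the function $x_j\mapsto F_1(x_j)-qF_2(x_j)$ is concave on $[\sigma_b^2,U_j]$.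
   Context: This is the per-coordinate subproblem arising in maximizing the end-to-end SNR of a wireless-powered amplify-and-forward relay network with power splitting: $x_k=\lambda_{k,I}P|h_k|^2+\sigma_b^2$ where $\lambda_{k,I}$ is the power-splitting ratio for information at relay $k$, $v_k$ is the battery energy-level variation, $h_k,g_k$ are source–relay and relay–destination channel gains, $\eta_1$ the energy conversion efficiency, $\eta_2$ the storage efficiency. In the paper the parameter $q$ is a value of the ratio $F_1/F_2$, hence nonnegative. *)

(* Defs.v *)
From HB Require Import structures.
From mathcomp Require Import all_boot all_order all_algebra.
From mathcomp Require Import complex.
Set Implicit Arguments. Unset Strict Implicit. Unset Printing Implicit Defensive.
Import Order.TTheory GRing.Theory Num.Theory.
Local Open Scope ring_scope.

Definition csq (R : rcfType) (z : R[i]) : R := Normc.normc z ^+ 2.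

Definition concave_on (R : rcfType) (lo hi : R) (f : R -> R) : Prop :=
  forall x y t : R, lo <= x <= hi -> lo <= y <= hi -> 0 <= t <= 1 ->
    t * f x + (1 - t) * f y <= f (t * x + (1 - t) * y).

Definition a_coef (R : rcfType) (eta1 eta2 P sb2 : R) (h : R[i]) (v : R) : R :=
  P * csq h + Num.max 0 (v / eta1) + Num.min 0 (v / (eta1 * eta2)) + sb2.

Definition U_coef (R : rcfType) (eta1 eta2 P sb2 : R) (h : R[i]) (v : R) : R :=
  (1 + Num.min 0 (v / (eta1 * eta2 * P * csq h))) * P * csq h + sb2.

Definition F1 (R : rcfType) (K : nat) (j : 'I_K) (eta1 eta2 P sb2 : R)
  (h g : 'I_K -> R[i]) (v x : 'I_K -> R) (xj : R) : R :=
  (Num.sqrt (eta1 * csq (g j) * (a_coef eta1 eta2 P sb2 (h j) (v j) - xj) * (1 - sb2 / xj))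
   + \sum_(k < K | k != j)
       Num.sqrt (eta1 * csq (g k) * (a_coef eta1 eta2 P sb2 (h k) (v k) - x k)
                 * (1 - sb2 / x k))) ^+ 2.

Definition F2 (R : rcfType) (K : nat) (j : 'I_K) (eta1 eta2 P sb2 sD2 : R)
  (h g : 'I_K -> R[i]) (v x : 'I_K -> R) (xj : R) : R :=
  eta1 * csq (g j) * (a_coef eta1 eta2 P sb2 (h j) (v j) - xj) * (sb2 / xj)
  + \sum_(k < K | k != j)
      eta1 * csq (g k) * (a_coef eta1 eta2 P sb2 (h k) (v k) - x k) * (sb2 / x k)
  + sD2.

(* Main.v *)
Require Import Defs.
From HB Require Import structures.
From mathcomp Require Import all_boot all_order all_algebra.
From mathcomp Require Import complex.
From mathcomp Require Import ring lra.
Import Order.TTheory GRing.Theory Num.Theory.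
Local Open Scope ring_scope.

Lemma csq_gt0 (R : rcfType) (z : R[i]) : z != 0 -> 0 < csq z.
Proof.
move=> nz; rewrite /csq.
have h0 : 0 <= Normc.normc z by rewrite /Normc.normc; case: z nz => a b _; exact: sqrtr_ge0.
have h1 : Normc.normc z != 0.
  by apply/eqP => /(@Normc.eq0_normc R) E; rewrite E eqxx in nz.
rewrite exprn_gt0 //; by rewrite lt_neqAle eq_sym h1 h0.
Qed.

Lemma inv_convex (R : rcfType) (x y t : R) : 0 < x -> 0 < y -> 0 <= t <= 1 ->
  0 <= t / x + (1 - t) / y - 1 / (t * x + (1 - t) * y).
Proof.
move=> hx hy /andP[t0 t1].
have hz : 0 < t * x + (1 - t) * y.
  case: (lerP t 0) => ht.
    have -> : t = 0 by lra.
    lra.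
  have : 0 < t * x by exact: mulr_gt0.
  have : 0 <= (1 - t) * y by apply: mulr_ge0; lra.
  lra.
have -> : t / x + (1 - t) / y - 1 / (t * x + (1 - t) * y)
  = t * (1 - t) * (x - y) ^+ 2 / (x * y * (t * x + (1 - t) * y)).
  field; rewrite ?lt0r_neq0 //; apply/andP; split; rewrite lt0r_neq0 //; nra.
apply: divr_ge0; last by apply: mulr_ge0; [apply: mulr_ge0|]; apply: ltW.
apply: mulr_ge0; [apply: mulr_ge0; lra | exact: sqr_ge0].
Qed.

Lemma sqrt_concave (R : rcfType) (A B t : R) : 0 <= A -> 0 <= B -> 0 <= t <= 1 ->
  t * Num.sqrt A + (1 - t) * Num.sqrt B <= Num.sqrt (t * A + (1 - t) * B).
Proof.
move=> hA hB /andP[t0 t1].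
have ha := sqrtr_ge0 A; have hb := sqrtr_ge0 B.
have eA := sqr_sqrtr hA; have eB := sqr_sqrtr hB.
set a := Num.sqrt A in ha eA *; set b := Num.sqrt B in hb eB *.
have hp : 0 <= t * a + (1 - t) * b by nra.
apply: (@le_trans _ _ (Num.sqrt ((t * a + (1 - t) * b) ^+ 2))).
  by rewrite sqrtr_sqr ger0_norm.
rewrite ler_sqrt; last by rewrite -eA -eB; nra.
rewrite -eA -eB.
have t1' : 0 <= 1 - t by lra.
have := mulr_ge0 (mulr_ge0 t0 t1') (sqr_ge0 (a - b)).
nra.
Qed.

Lemma core (R : rcfType) (c a s S q T d x y t : R) :
  0 < c -> 0 < s -> 0 <= S -> 0 <= q -> s <= x <= a -> s <= y <= a -> 0 <= t <= 1 ->
  t * ((Num.sqrt (c * (a - x) * (1 - s / x)) + S) ^+ 2 - q * (c * (a - x) * (s / x) + T + d))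
  + (1 - t) * ((Num.sqrt (c * (a - y) * (1 - s / y)) + S) ^+ 2 - q * (c * (a - y) * (s / y) + T + d))
  <= (Num.sqrt (c * (a - (t * x + (1 - t) * y)) * (1 - s / (t * x + (1 - t) * y))) + S) ^+ 2
     - q * (c * (a - (t * x + (1 - t) * y)) * (s / (t * x + (1 - t) * y)) + T + d).
Proof.
move=> c0 s0 S0 q0 /andP[sx xa] /andP[sy ya] /andP[t0 t1].
set z := t * x + (1 - t) * y.
have t1' : 0 <= 1 - t by lra.
have sz : s <= z.
  have : t * s <= t * x by apply: ler_wpM2l.
  have : (1 - t) * s <= (1 - t) * y by apply: ler_wpM2l.
  rewrite /z; lra.
have za : z <= a.
  have : t * x <= t * a by apply: ler_wpM2l.
  have : (1 - t) * y <= (1 - t) * a by apply: ler_wpM2l.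
  rewrite /z; lra.
have fge : forall w, s <= w -> w <= a -> 0 <= c * (a - w) * (1 - s / w).
  move=> w sw wa; have w0 : 0 < w by lra.
  have : s / w <= 1 by rewrite ler_pdivrMr // mul1r.
  move=> h; apply: mulr_ge0; [apply: mulr_ge0|]; lra.
have fid : forall w, 0 < w -> c * (a - w) * (1 - s / w) = c * (a + s - w) - c * a * s * (1 / w).
  by move=> w w0; field; rewrite lt0r_neq0.
have gid : forall w, 0 < w -> c * (a - w) * (s / w) = c * a * s * (1 / w) - c * s.
  by move=> w w0; field; rewrite lt0r_neq0.
have x0 : 0 < x by lra.
have y0 : 0 < y by lra.
have z0 : 0 < z by lra.
have hD := @inv_convex R x y t x0 y0 (introT andP (conj t0 t1)).
rewrite -/z in hD.
set D := t / x + (1 - t) / y - 1 / z in hD.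
have a0 : 0 < a by lra.
have E0 : 0 <= c * a * s * D by apply: mulr_ge0 => //; apply: mulr_ge0; [apply: mulr_ge0|]; apply: ltW.
set E := c * a * s * D in E0.
have hf : t * (c * (a - x) * (1 - s / x)) + (1 - t) * (c * (a - y) * (1 - s / y))
          = c * (a - z) * (1 - s / z) - E.
  by rewrite !fid // /E /D /z; ring.
have hg : t * (c * (a - x) * (s / x)) + (1 - t) * (c * (a - y) * (s / y))
          = c * (a - z) * (s / z) + E.
  by rewrite !gid // /E /D /z; ring.
have hsq : t * Num.sqrt (c * (a - x) * (1 - s / x)) + (1 - t) * Num.sqrt (c * (a - y) * (1 - s / y))
           <= Num.sqrt (c * (a - z) * (1 - s / z)).
  apply: le_trans (@sqrt_concave R _ _ t (fge _ sx xa) (fge _ sy ya) (introT andP (conj t0 t1))) _.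
  by rewrite ler_sqrt ?fge // hf; lra.
have ex := sqr_sqrtr (fge _ sx xa); have ey := sqr_sqrtr (fge _ sy ya);
have ez := sqr_sqrtr (fge _ sz za).
move: hf hg hsq ex ey ez.
set fx := c * (a - x) * (1 - s / x); set fy := c * (a - y) * (1 - s / y);
set fz := c * (a - z) * (1 - s / z).
set gx := c * (a - x) * (s / x); set gy := c * (a - y) * (s / y);
set gz := c * (a - z) * (s / z).
set rx := Num.sqrt fx; set ry := Num.sqrt fy; set rz := Num.sqrt fz.
move=> hf hg hsq ex ey ez.
have h1 : 0 <= S * (rz - (t * rx + (1 - t) * ry)) by apply: mulr_ge0 => //; lra.
have h2 : 0 <= q * E by apply: mulr_ge0.
rewrite !sqrrD ex ey ez.
nra.
Qed.

Lemma U_le_a (R : rcfType) (eta1 eta2 P s : R) (h : R[i]) (v : R) :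
  0 < eta1 -> 0 < eta2 -> 0 < P -> h != 0 ->
  U_coef eta1 eta2 P s h v <= a_coef eta1 eta2 P s h v.
Proof.
move=> e1 e2 P0 h0; have H0 := @csq_gt0 R h h0.
rewrite /U_coef /a_coef; move: H0; set H := csq h => H0.
have d0 : 0 < eta1 * eta2 * P * H by apply: mulr_gt0 => //; apply: mulr_gt0 => //; apply: mulr_gt0.
have d1 : 0 < eta1 * eta2 by apply: mulr_gt0.
case: (lerP 0 v) => hv.
  rewrite (@min_l _ _ 0 (v / (eta1 * eta2 * P * H))); last by apply: divr_ge0 => //; apply: ltW.
  have : 0 <= Num.max 0 (v / eta1) by rewrite le_max lexx.
  have : 0 <= v / (eta1 * eta2) by apply: divr_ge0 => //; apply: ltW.
  move=> m1 m2; rewrite (@min_l _ _ 0 (v / (eta1 * eta2))) //; lra.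
have n1 : v / (eta1 * eta2 * P * H) < 0 by rewrite ltr_pdivrMr // mul0r.
have n2 : v / (eta1 * eta2) < 0 by rewrite ltr_pdivrMr // mul0r.
have n3 : v / eta1 < 0 by rewrite ltr_pdivrMr // mul0r.
rewrite (@min_r _ _ 0 (v / (eta1 * eta2 * P * H))); last by apply: ltW.
rewrite (@min_r _ _ 0 (v / (eta1 * eta2))); last by apply: ltW.
rewrite (@max_l _ _ 0 (v / eta1)); last by apply: ltW.
have -> : (1 + v / (eta1 * eta2 * P * H)) * P * H = P * H + v / (eta1 * eta2).
  field; rewrite !lt0r_neq0 //.
lra.
Qed.

Theorem lemma2 (R : rcfType) (K : nat) (j : 'I_K)
  (eta1 eta2 P sb2 sD2 : R) (h g : 'I_K -> R[i]) (v x : 'I_K -> R) (q : R) :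
  0 < eta1 <= 1 -> 0 < eta2 <= 1 -> 0 < P -> 0 < sb2 -> 0 < sD2 ->
  (forall k, h k != 0) -> (forall k, g k != 0) ->
  (forall k, - (eta1 * eta2 * P * csq (h k)) <= v k) ->
  (forall k, k != j -> sb2 <= x k <= U_coef eta1 eta2 P sb2 (h k) (v k)) ->
  0 <= q ->
  concave_on sb2 (U_coef eta1 eta2 P sb2 (h j) (v j))
    (fun xj => F1 j eta1 eta2 P sb2 h g v x xj
               - q * F2 j eta1 eta2 P sb2 sD2 h g v x xj).
Proof.
move=> /andP[e1 _] /andP[e2 _] P0 s0 _ hh hg _ _ q0.
move=> y1 y2 t /andP[a1 b1] /andP[a2 b2] ht.
have Ua := @U_le_a R eta1 eta2 P sb2 (h j) (v j) e1 e2 P0 (hh j).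
rewrite /F1 /F2.
set a := a_coef eta1 eta2 P sb2 (h j) (v j) in Ua *.
set S := \sum_(k < K | k != j) _.
set T := \sum_(k < K | k != j) _.
have c0 : 0 < eta1 * csq (g j) by apply: mulr_gt0 => //; apply: csq_gt0.
have S0 : 0 <= S by apply: sumr_ge0 => k _; apply: sqrtr_ge0.
have hx1 : sb2 <= y1 <= a by rewrite a1 (le_trans b1 Ua).
have hx2 : sb2 <= y2 <= a by rewrite a2 (le_trans b2 Ua).
exact: (@core R (eta1 * csq (g j)) a sb2 S q T sD2 y1 y2 t c0 s0 S0 q0 hx1 hx2 ht).
Qed.
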